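(* Consider an MILP instance $\min\{\mathbf{c}\mathbf{x} \mid A\mathbf{x}=\mathbf{b},\ \mathbf{l}\le\mathbf{x}\le\mathbf{u},\ \mathbf{x}\in\mathbb{Z}^z\times\mathbb{Q}^q\}$ with $A=(A_{\mathbb{Z}}\ A_{\mathbb{Q}})$, $\mathbf{x}=(\mathbf{x}_{\mathbb{Z}},\mathbf{x}_{\mathbb{Q}})$, $\mathbf{c}=(\mathbf{c}_{\mathbb{Z}},\mathbf{c}_{\mathbb{Q}})$, $\mathbf{l}=(\mathbf{l}_{\mathbb{Z}},\mathbf{l}_{\mathbb{Q}})$, $\mathbf{u}=(\mathbf{u}_{\mathbb{Z}},\mathbf{u}_{\mathbb{Q}})$ split into integer and rational parts, which has an optimal solution, and let $M$ be its fractionality and $\tilde M := M!$. Consider the integralized instance $\min\{(\tilde M\mathbf{c}_{\mathbb{Z}},\mathbf{c}_{\mathbb{Q}})\mathbf{z} \mid (\tilde M A_{\mathbb{Z}}\ A_{\mathbb{Q}})\mathbf{z} = \tilde M\mathbf{b},\ (\mathbf{l}_{\mathbb{Z}},\tilde M\mathbf{l}_{\mathbb{Q}}) \le (\mathbf{z}_{\mathbb{Z}},\mathbf{z}_{\mathbb{Q}}) \le (\mathbf{u}_{\mathbb{Z}},\tilde M\mathbf{u}_{\mathbb{Q}}),\ \mathbf{z}\in\mathbb{Z}^{z+q}\}$. If $\mathbf{z}=(\mathbf{z}_{\mathbb{Z}},\mathbf{z}_{\mathbb{Q}})\in\mathbb{Z}^{z+q}$ is an optimal solution of the integralized instance, then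 $\mathbf{x}=(\mathbf{z}_{\mathbb{Z}},\frac{1}{\tilde M}\mathbf{z}_{\mathbb{Q}})$ is an optimal solution of the original MILP instance.
   Context: The fractionality of an MILP instance is the minimum, over all optimal solutions $\mathbf{x}$, of the largest denominator among the entries of $\mathbf{x}$ written in lowest terms. *)

(* Defs.v *)
From HB Require Import structures.
From mathcomp Require Import all_boot all_order all_algebra.
Set Implicit Arguments. Unset Strict Implicit. Unset Printing Implicit Defensive.
Import Order.TTheory GRing.Theory Num.Theory.
Local Open Scope ring_scope.

(* Bounds may be infinite: [None] stands for -oo (lower) / +oo (upper). *)
Definition lbok (o : option rat) (v : rat) : bool :=
  if o is Some a then a <= v else true.
Definition ubok (o : option rat) (v : rat) : bool :=
  if o is Some a then v <= a else true.

Definition sbound (s : rat) (o : option rat) : option rat := omap (fun a => s * a) o.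

(* Feasibility for a mixed program with [z] integer-part variables [xZ]
   and [q] rational-part variables [xQ]:
   AZ xZ + AQ xQ = b, l <= x <= u, xZ integral; if [intQ] is true the
   rational-part variables are also required to be integral
   (this is used for the integralized instance, where z in Z^{z+q}). *)
Definition mfeas (intQ : bool) (m z q : nat)
  (AZ : 'M[rat]_(m, z)) (AQ : 'M[rat]_(m, q)) (b : 'cV[rat]_m)
  (lZ uZ : 'I_z -> option rat) (lQ uQ : 'I_q -> option rat)
  (xZ : 'cV[rat]_z) (xQ : 'cV[rat]_q) : Prop :=
  AZ *m xZ + AQ *m xQ = b /\
  (forall i, xZ i 0 \is a Num.int) /\
  (intQ -> forall j, xQ j 0 \is a Num.int) /\
  (forall i, lbok (lZ i) (xZ i 0) && ubok (uZ i) (xZ i 0)) /\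
  (forall j, lbok (lQ j) (xQ j 0) && ubok (uQ j) (xQ j 0)).

Definition mobj (z q : nat) (cZ : 'rV[rat]_z) (cQ : 'rV[rat]_q)
  (xZ : 'cV[rat]_z) (xQ : 'cV[rat]_q) : rat :=
  (cZ *m xZ) 0 0 + (cQ *m xQ) 0 0.

Definition mopt (intQ : bool) (m z q : nat)
  (cZ : 'rV[rat]_z) (cQ : 'rV[rat]_q)
  (AZ : 'M[rat]_(m, z)) (AQ : 'M[rat]_(m, q)) (b : 'cV[rat]_m)
  (lZ uZ : 'I_z -> option rat) (lQ uQ : 'I_q -> option rat)
  (xZ : 'cV[rat]_z) (xQ : 'cV[rat]_q) : Prop :=
  mfeas intQ AZ AQ b lZ uZ lQ uQ xZ xQ /\
  forall yZ yQ, mfeas intQ AZ AQ b lZ uZ lQ uQ yZ yQ ->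
    mobj cZ cQ xZ xQ <= mobj cZ cQ yZ yQ.

Definition maxden (z q : nat) (xZ : 'cV[rat]_z) (xQ : 'cV[rat]_q) : nat :=
  maxn (\max_(i < z) absz (denq (xZ i ord0))) (\max_(j < q) absz (denq (xQ j ord0))).

Definition fractionality (m z q : nat)
  (cZ : 'rV[rat]_z) (cQ : 'rV[rat]_q)
  (AZ : 'M[rat]_(m, z)) (AQ : 'M[rat]_(m, q)) (b : 'cV[rat]_m)
  (lZ uZ : 'I_z -> option rat) (lQ uQ : 'I_q -> option rat) (M : nat) : Prop :=
  (exists xZ xQ, mopt false cZ cQ AZ AQ b lZ uZ lQ uQ xZ xQ /\ maxden xZ xQ = M) /\
  (forall xZ xQ, mopt false cZ cQ AZ AQ b lZ uZ lQ uQ xZ xQ -> (M <= maxden xZ xQ)%N).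

(* Main.v *)
Require Import Defs.
From mathcomp Require Import all_boot all_order all_algebra.
Import Order.TTheory GRing.Theory Num.Theory.
Local Open Scope ring_scope.
Lemma key (r : rat) (k : nat) : (absz (denq r) %| k)%N -> k%:R * r \is a Num.int.
Proof.
case/dvdnP => t ->.
have hd : ((absz (denq r))%:R : rat) = (denq r)%:~R.
  by rewrite natr_absz gtr0_norm ?denq_gt0.
have hD : ((denq r)%:~R : rat) != 0 by rewrite intr_eq0 gt_eqF ?denq_gt0.
rewrite -{2}(divq_num_den r) natrM hd mulrA -(mulrA _ _ (numq r)%:~R) (mulrC (denq r)%:~R).
rewrite -!mulrA divff // mulr1.
by rewrite rpredM ?rpred_nat ?rpred_int.
Qed.

Theorem lemma4 (m z q : nat)
  (cZ : 'rV[rat]_z) (cQ : 'rV[rat]_q)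
  (AZ : 'M[rat]_(m, z)) (AQ : 'M[rat]_(m, q)) (b : 'cV[rat]_m)
  (lZ uZ : 'I_z -> option rat) (lQ uQ : 'I_q -> option rat)
  (M : nat)
  (hopt : exists xZ xQ, mopt false cZ cQ AZ AQ b lZ uZ lQ uQ xZ xQ)
  (hM : fractionality cZ cQ AZ AQ b lZ uZ lQ uQ M)
  (zZ : 'cV[rat]_z) (zQ : 'cV[rat]_q) :
  let Mt : rat := (M`!)%:R in
  mopt true (Mt *: cZ) cQ (Mt *: AZ) AQ (Mt *: b)
       lZ uZ (fun j => sbound Mt (lQ j)) (fun j => sbound Mt (uQ j)) zZ zQ ->
  mopt false cZ cQ AZ AQ b lZ uZ lQ uQ zZ (Mt^-1 *: zQ).
Proof.
move=> Mt [[hAz [hiZ [_ [hbZ hbQ]]]] hoptz].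
have Mt0 : 0 < Mt by rewrite ltr0n fact_gt0.
have Mtn0 : Mt != 0 by rewrite gt_eqF.
have objE : forall xZ xQ, mobj (Mt *: cZ) cQ xZ (Mt *: xQ) = Mt * mobj cZ cQ xZ xQ.
  move=> xZ xQ; rewrite /mobj -scalemxAl -scalemxAr !mxE mulrDr.
  by [].
split.
  split.
    apply: (scalerI Mtn0); rewrite -hAz scalerDr -scalemxAr scalerA divff // scale1r.
    by rewrite scalemxAl.
  split; first by [].
  split; first by [].
  split; first by [].
  move=> j; have := hbQ j; rewrite mxE.
  case: (lQ j) => [a|]; case: (uQ j) => [c|] //=.
  - by rewrite ler_pdivlMl // ler_pdivrMl.
  - by rewrite ler_pdivlMl.
  - by rewrite ler_pdivrMl.
move=> yZ yQ hy.
case: hM => [[xZ [xQ [[hxf hxopt] hxM]]] _].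
apply: le_trans (hxopt _ _ hy).
rewrite -(ler_pM2l Mt0) -objE scalerA divff // scale1r.
rewrite -objE.
apply: hoptz.
case: hxf => [hxe [hxiZ [_ [hxbZ hxbQ]]]].
split.
  by rewrite -scalemxAl -scalemxAr -scalerDr hxe.
split; first by [].
split.
  move=> _ j; rewrite mxE; apply: key.
  apply: dvdn_fact; rewrite absz_gt0 gt_eqF ?denq_gt0 //=.
  rewrite -hxM /maxden leq_max; apply/orP; right.
  have -> : (0 : 'I_1) = ord0 by apply/val_inj.
  apply: leq_bigmax.
split; first by [].
move=> j; have := hxbQ j; rewrite mxE.
case: (lQ j) => [a|]; case: (uQ j) => [c|] //=.
- by rewrite !ler_pM2l.
- by rewrite ler_pM2l.
- by rewrite ler_pM2l.
Qed.
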